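(* Let $F:\mathbb{R}^n\to\mathbb{R}$ be a convex differentiable function with a minimizer $x_*$, let $\xi^{(1)},\dots,\xi^{(T)}$ be i.i.d. random variables, let $\mu_x,\mu_y\in[0,1)$ be fixed, and let $z^{(1)},\dots,z^{(T)}$ be (random) iterates produced by a base optimizer, with $x^{(1)}=z^{(1)}$, $y^{(t)}=\mu_y x^{(t)}+(1-\mu_y)z^{(t)}$, $x^{(t+1)}=\mu_x x^{(t)}+(1-\mu_x)z^{(t+1)}$, and $\bar{x}^{(T)}=\frac1T\sum_{t=1}^T x^{(t)}$. Assume the base optimizer satisfies the regret guarantee $\sum_{t=1}^T\mathbb{E}[\langle\nabla F(y^{(t)}),z^{(t)}-x_*\rangle]=\mathcal{O}(\sqrt{T})$. Then $$\mathbb{E}[F(\bar{x}^{(T)})-F(x_* )]=\mathcal{O}\Big(\frac{1}{\sqrt T}\Big).$$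
   Context: This is the Generalized Primal Averaging (GPA) framework applied on top of an arbitrary base optimizer generating $z^{(t)}$; $\mathbb{E}[F(x^{(1)})-F(x_* )]$ is assumed finite and $\mu_x,\mu_y$ do not depend on $T$. *)

(* Defs.v *)
From HB Require Import structures.
From mathcomp Require Import all_boot all_order all_algebra.
From mathcomp Require Import all_classical all_reals all_analysis.
Set Implicit Arguments. Unset Strict Implicit. Unset Printing Implicit Defensive.
Import Order.TTheory GRing.Theory Num.Theory.
Import numFieldNormedType.Exports.
Local Open Scope classical_set_scope.
Local Open Scope ring_scope.

Definition dotv (R : realType) (n : nat) (u v : 'rV[R]_n) : R :=
  \sum_(i < n) u 0 i * v 0 i.

Definition gradient (R : realType) (n : nat) (F : 'rV[R]_n -> R) (x : 'rV[R]_n)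
  : 'rV[R]_n := \row_(i < n) ('d F x (delta_mx 0 i : 'rV[R]_n)).

Definition convex_fn (R : realType) (n : nat) (F : 'rV[R]_n -> R) : Prop :=
  forall (x y : 'rV[R]_n) (l : R), 0 <= l -> l <= 1 ->
    F (l *: x + (1 - l) *: y) <= l * F x + (1 - l) * F y.

(* GPA iterates (0-based: index t here is t+1 in the paper).
   x 0 = z 0,  x (t+1) = mu_x x t + (1 - mu_x) z (t+1). *)
Fixpoint gpa_x (R : realType) (n : nat) (Omega : Type) (mux : R)
  (z : nat -> Omega -> 'rV[R]_n) (t : nat) (w : Omega) : 'rV[R]_n :=
  match t with
  | 0 => z 0%N w
  | t'.+1 => mux *: gpa_x mux z t' w + (1 - mux) *: z t'.+1 w
  end.

Definition gpa_y (R : realType) (n : nat) (Omega : Type) (mux muy : R)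
  (z : nat -> Omega -> 'rV[R]_n) (t : nat) (w : Omega) : 'rV[R]_n :=
  muy *: gpa_x mux z t w + (1 - muy) *: z t w.

Definition gpa_xbar (R : realType) (n : nat) (Omega : Type) (mux : R)
  (z : nat -> Omega -> 'rV[R]_n) (T : nat) (w : Omega) : 'rV[R]_n :=
  (T%:R)^-1 *: \sum_(t < T) gpa_x mux z t w.

Definition iid_seq (d : measure_display) (Omega : measurableType d)
  (R : realType) (P : probability Omega R)
  (dX : measure_display) (X : measurableType dX) (xi : nat -> Omega -> X) : Prop :=
  [/\ (forall i, measurable_fun setT (xi i)),
      (forall (s : seq nat) (A : nat -> set X), uniq s ->
         (forall i, measurable (A i)) ->
         P (\bigcap_(i in [set` s]) (xi i @^-1` A i)) =
         (\prod_(i <- s) P (xi i @^-1` A i))%E) &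
      (forall i (A : set X), measurable A ->
         P (xi i @^-1` A) = P (xi 0%N @^-1` A))].

(* Main.v *)
Require Import Defs.
From HB Require Import structures.
From mathcomp Require Import all_boot all_order all_algebra.
From mathcomp Require Import all_classical all_reals all_analysis.
From mathcomp Require Import ring lra.
Import Order.TTheory GRing.Theory Num.Theory.
Import numFieldNormedType.Exports.
Local Open Scope classical_set_scope.
Local Open Scope ring_scope.

Lemma dotv_diff (R : realType) (n : nat) (F : 'rV[R]_n -> R) x v :
  dotv (gradient F x) v = 'd F x v.
Proof.
rewrite [in RHS](row_sum_delta v) linear_sum /dotv; apply: eq_bigr => i _.
by rewrite linearZ /= mxE mulrC.
Qed.

Lemma diff_le (R : realType) (n : nat) (F : 'rV[R]_n -> R) x y :
  convex_fn F -> differentiable F x -> 'd F x (y - x) <= F y - F x.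
Proof.
move=> cF dF; rewrite -deriveE //.
have D := @diff_derivable _ _ _ F x (y - x) dF.
have L : (fun h : R => h^-1 *: ((F \o shift x) (h *: (y - x)) - F x)) @ 0%R^' --> 'D_(y - x) F x := D.
apply: (@cvgr_to_le _ (0%R^'+) _ _ (fun h : R => h^-1 *: ((F \o shift x) (h *: (y - x)) - F x))).
  apply: cvg_trans L; move=> A /=; rewrite !near_simpl /=.
  rewrite !near_withinE; apply: filter_app; near=> u => Hu ur; apply: Hu.
  by rewrite gt_eqF.
near=> h.
have h0 : 0 < h by near: h; exact: nbhs_right_gt.
have h1 : h <= 1 by near: h; exact: nbhs_right_le.
have := cF y x h (ltW h0) h1.
have -> : h *: y + (1 - h) *: x = h *: (y - x) + x.
  by apply/rowP => i; rewrite !mxE; ring.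
rewrite /= => H.
have -> : forall a b : R, a *: b = a * b by [].
rewrite mulrC ler_pdivrMr //; nra.
Unshelve. all: by end_near. Qed.

Lemma grad_ineq (R : realType) (n : nat) (F : 'rV[R]_n -> R) x y :
  convex_fn F -> (forall x, differentiable F x) ->
  F x + dotv (gradient F x) (y - x) <= F y.
Proof.
move=> cF dF; rewrite dotv_diff.
have := @diff_le _ _ F x y cF (dF x); lra.
Qed.

Lemma step (R : realType) (n : nat) (F : 'rV[R]_n -> R) xs a zz mux muy :
  convex_fn F -> (forall x, differentiable F x) ->
  0 <= mux -> mux < 1 -> 0 <= muy -> muy < 1 ->
  F (mux *: a + (1 - mux) *: zz) - F xs - mux * (F a - F xs) <=
  (1 - mux) * dotv (gradient F (muy *: (mux *: a + (1 - mux) *: zz) + (1 - muy) *: zz))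
     (zz - xs).
Proof.
move=> cF dF m0 m1 u0 u1.
set b := mux *: a + (1 - mux) *: zz.
set yy := muy *: b + (1 - muy) *: zz.
set p := muy * mux.
have p0 : 0 <= p by rewrite /p mulr_ge0.
have p1 : p < 1 by rewrite /p; nra.
have i1 := @grad_ineq _ _ F yy xs cF dF.
have i2 := @grad_ineq _ _ F yy a cF dF.
have pn0 : 1 - p != 0 by rewrite subr_eq0 eq_sym lt_eqF.
set l := (mux - p) / (1 - p).
have l0 : 0 <= l by rewrite /l divr_ge0 // /p; nra.
have l1 : l <= 1 by rewrite /l ler_pdivrMr ?subr_gt0 //; nra.
have eb : b = l *: a + (1 - l) *: yy.
  apply/rowP => i; rewrite /yy /b /l /p !mxE; field; exact: pn0.
have conv := cF a yy l l0 l1; rewrite -eb in conv.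
have conv2 : (1 - p) * F b <= (mux - p) * F a + (1 - mux) * F yy.
  have q0 : 0 <= 1 - p by rewrite subr_ge0 ltW.
  have := ler_wpM2l q0 conv.
  have -> : (1 - p) * (l * F a + (1 - l) * F yy) = (mux - p) * F a + (1 - mux) * F yy.
    rewrite /l; field; exact: pn0.
  by [].
clearbody l.
set g := gradient F yy.
have {}i1 : F yy + dotv g (xs - yy) <= F xs := i1.
have {}i2 : F yy + dotv g (a - yy) <= F a := i2.
have lin : (1 - p) * dotv g (zz - xs) =
  - (1 - p) * dotv g (xs - yy) - p * dotv g (a - yy).
  rewrite /dotv !mulr_sumr -sumrB; apply: eq_bigr => i _.
  rewrite /yy /b /p !mxE; ring.
clearbody g yy b.
set I := dotv g (zz - xs) in lin *.
set D1 := dotv g (xs - yy) in i1 lin.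
set D2 := dotv g (a - yy) in i2 lin.
have q0 : 0 < 1 - p by rewrite subr_gt0.
have r0 : 0 <= 1 - mux by rewrite subr_ge0 ltW.
have j1 := ler_wpM2l (mulr_ge0 r0 (ltW q0)) i1.
have j2 := ler_wpM2l (mulr_ge0 r0 p0) i2.
rewrite -(ler_pM2l q0).
nra.
Qed.

Lemma base (R : realType) (n : nat) (F : 'rV[R]_n -> R) xs zz muy :
  convex_fn F -> (forall x, differentiable F x) ->
  F zz - F xs <= dotv (gradient F (muy *: zz + (1 - muy) *: zz)) (zz - xs).
Proof.
move=> cF dF.
have -> : muy *: zz + (1 - muy) *: zz = zz by apply/rowP => i; rewrite !mxE; ring.
have := @grad_ineq _ _ F zz xs cF dF.
have -> : xs - zz = - (zz - xs) by rewrite opprB.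
have -> : forall g v : 'rV[R]_n, dotv g (- v) = - dotv g v.
  move=> g v; apply/eqP; rewrite -addr_eq0 /dotv -big_split big1 //= => i _; rewrite mxE; ring.
lra.
Qed.

Lemma sum_ind (R : realType) (h ip : nat -> R) mux :
  0 <= mux -> mux < 1 -> (forall t, 0 <= h t) -> h 0%N <= ip 0%N ->
  (forall t, h t.+1 - mux * h t <= (1 - mux) * ip t.+1) ->
  forall T, (1 - mux) * \sum_(t < T.+1) h t <= (1 - mux) * \sum_(t < T.+1) ip t + mux * ip 0%N.
Proof.
move=> m0 m1 h0 hi hs T.
suff Q : (1 - mux) * \sum_(t < T.+1) h t + mux * h T <=
         (1 - mux) * \sum_(t < T.+1) ip t + mux * h 0%N.
  have := h0 T; have := ler_wpM2l m0 hi; nra.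
elim: T => [|T IH].
  rewrite !big_ord_recr !big_ord0 /=; nra.
rewrite (big_ord_recr T.+1) (big_ord_recr T.+1 ip) /=.
have := hs T; nra.
Qed.

Lemma jensen (R : realType) (n : nat) (F : 'rV[R]_n -> R) (x : nat -> 'rV[R]_n) :
  convex_fn F -> forall T,
  F ((T.+1%:R)^-1 *: \sum_(t < T.+1) x t) <= (T.+1%:R)^-1 * \sum_(t < T.+1) F (x t).
Proof.
move=> cF; elim => [|T IH].
  by rewrite !big_ord_recr !big_ord0 /= invr1 scale1r mul1r !add0r.
rewrite big_ord_recr (big_ord_recr T.+1 (fun t => F (x t))) /=.
set S := \sum_(i < T.+1) x i.
set SF := \sum_(i < T.+1) F (x i).
pose l : R := (T.+1)%:R / (T.+2)%:R.
have Tp : 0 < T.+1%:R :> R by rewrite ltr0n.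
have Tq : 0 < T.+2%:R :> R by rewrite ltr0n.
have l0 : 0 <= l by rewrite /l divr_ge0 // ltW.
have l1 : l <= 1 by rewrite /l ler_pdivrMr // mul1r ler_nat.
have e : (T.+2%:R)^-1 *: (S + x T.+1) = l *: ((T.+1%:R)^-1 *: S) + (1 - l) *: x T.+1.
  apply/rowP => i; rewrite /l !mxE -!mulrA; field.
  by apply/andP; split; apply/lt0r_neq0.
rewrite e; apply: le_trans (cF _ _ l l0 l1) _.
have := ler_wpM2l l0 IH.
have -> : l * ((T.+1%:R)^-1 * SF) = (T.+2%:R)^-1 * SF.
  rewrite /l; field; by apply/andP; split; apply/lt0r_neq0.
have -> : (T.+2%:R)^-1 * (SF + F (x T.+1)) = (T.+2%:R)^-1 * SF + (1 - l) * F (x T.+1).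
  rewrite /l; field; by apply/lt0r_neq0.
by move=> H; rewrite lerD2r; exact: H.
Qed.

Lemma int_mono d (T : measurableType d) (R : realType)
  (mu : {measure set T -> \bar R}) (f g : T -> \bar R) :
  (forall x, (0 <= f x)%E) -> (forall x, (f x <= g x)%E) ->
  (\int[mu]_x f x <= \int[mu]_x g x)%E.
Proof.
move=> f0 fg; rewrite !ge0_integralTE //; last first.
  by move=> x; exact: le_trans (f0 x) (fg x).
apply: ereal_sup_le => _ [h hf <-]; exists h => // x.
exact: le_trans (hf x) (fg x).
Qed.

Theorem corollary1
  (R : realType) (n : nat) (F : 'rV[R]_n -> R) (xstar : 'rV[R]_n)
  (d : measure_display) (Omega : measurableType d) (P : probability Omega R)
  (dX : measure_display) (X : measurableType dX) (xi : nat -> Omega -> X)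
  (mux muy : R) (z : nat -> Omega -> 'rV[R]_n) :
  convex_fn F ->
  (forall x, differentiable F x) ->
  (forall x, F xstar <= F x) ->
  iid_seq P xi ->
  0 <= mux -> mux < 1 -> 0 <= muy -> muy < 1 ->
  (* the base optimizer produces z^(t) from xi^(1), ..., xi^(t-1) *)
  (forall t : nat, exists g : ('I_(t) -> X) -> 'rV[R]_n,
      forall w, z t w = g (fun s : 'I_(t) => xi (nat_of_ord s) w)) ->
  (forall (t : nat) (i : 'I_n), measurable_fun setT (fun w => z t w 0 i)) ->
  (* E[F(x^(1)) - F(x_star)] is finite *)
  (\int[P]_w ((F (gpa_x mux z 0 w) - F xstar)%:E) < +oo)%E ->
  (* the expectations in the regret guarantee exist (are finite) *)
  (forall t : nat, P.-integrable setT
     (fun w => (dotv (gradient F (gpa_y mux muy z t w)) (z t w - xstar))%:E)) ->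
  (* regret guarantee: sum_{t=1}^T E[<grad F(y^(t)), z^(t) - x_star>] = O(sqrt T) *)
  (exists (C : R) (T0 : nat), forall T : nat, (T0 <= T)%N ->
     `| \sum_(t < T) fine (\int[P]_w
           ((dotv (gradient F (gpa_y mux muy z t w)) (z t w - xstar))%:E)) |
     <= C * Num.sqrt (T%:R)) ->
  (* conclusion: E[F(xbar^(T)) - F(x_star)] = O(1 / sqrt T) *)
  exists (C : R) (T0 : nat), forall T : nat, (T0 <= T)%N -> (0 < T)%N ->
    (\int[P]_w ((F (gpa_xbar mux z T w) - F xstar)%:E)
       <= (C / Num.sqrt (T%:R))%:E)%E.
Proof.
move=> cF dF Fmin _ m0 m1 u0 u1 _ _ _ Iint [C [T0 HC]].
pose ip t w := dotv (gradient F (gpa_y mux muy z t w)) (z t w - xstar).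
pose I t := fine (\int[P]_w (ip t w)%:E).
pose K := mux / (1 - mux).
have r0 : 0 < 1 - mux by rewrite subr_gt0.
have K0 : 0 <= K by rewrite /K divr_ge0 // ltW.
exists (`|C| + K * `|I 0%N|), T0 => T TT0.
case: T TT0 => [//|S] TT0 _.
pose r := (S.+1%:R : R)^-1.
have pw : forall w, F (gpa_xbar mux z S.+1 w) - F xstar <=
    r * (\sum_(t < S.+1) ip t w + K * ip 0%N w).
  move=> w.
  have J := @jensen _ _ F (fun t => gpa_x mux z t w) cF S.
  have Hs := @sum_ind R (fun t => F (gpa_x mux z t w) - F xstar) (fun t => ip t w) mux
    m0 m1 _ _ _ S.
  have {Hs} Hs := Hs (fun t => ltac:(by rewrite subr_ge0))
    (@base _ _ F xstar (z 0%N w) muy cF dF)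
    (fun t => @step _ _ F xstar (gpa_x mux z t w) (z t.+1 w) mux muy cF dF m0 m1 u0 u1).
  rewrite sumrB sumr_const card_ord -mulr_natl in Hs.
  have hK : (1 - mux) * K = mux by rewrite /K mulrC divfK // lt0r_neq0.
  have H1 : \sum_(t < S.+1) F (gpa_x mux z t w) - S.+1%:R * F xstar <=
            \sum_(t < S.+1) ip t w + K * ip 0%N w.
    rewrite -(ler_pM2l r0) [X in _ <= X]mulrDr mulrA hK; exact: Hs.
  have rp : 0 < r by rewrite /r invr_gt0 ltr0n.
  have rN : r * S.+1%:R = 1 by rewrite /r mulVf // pnatr_eq0.
  have := ler_wpM2l (ltW rp) H1.
  rewrite mulrBr mulrA rN mul1r.
  move: J; rewrite /gpa_xbar -/r.
  lra.
pose g w := (r%:E * (\sum_(t < S.+1) (ip t w)%:E + K%:E * (ip 0%N w)%:E))%E.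
have iip : forall t, P.-integrable setT (fun w => (ip t w)%:E) by move=> t; exact: Iint.
apply: le_trans (@int_mono _ _ _ P _ g _ _) _.
- by move=> w; rewrite lee_fin subr_ge0.
- by move=> w; rewrite /g sumEFin -EFinM lee_fin; exact: pw.
rewrite /g integralZl //; last first.
  apply: integrableD => //; first exact: integrable_sum.
  exact: integrableZl.
rewrite integralD //; last exact: integrableZl.
  2: exact: integrable_sum.
rewrite integral_sum // integralZl //.
have hI t : (\int[P]_w (ip t w)%:E = (I t)%:E)%E.
  by rewrite /I fineK // integrable_fin_num.
under eq_bigr do rewrite hI.
rewrite hI sumEFin -EFinM lee_fin.
have H : `|\sum_(i < S.+1) I i| <= C * Num.sqrt (S.+1%:R) := HC S.+1 TT0.
set s := Num.sqrt (S.+1%:R) in H *.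
have s0 : 0 < s by rewrite /s sqrtr_gt0 ltr0n.
have ss : s * s = S.+1%:R by rewrite /s -expr2 sqr_sqrtr // ler0n.
have rr : r = (s * s)^-1 by rewrite /r ss.
have N1 : 1 <= S.+1%:R :> R by rewrite ler1n.
have s1 : 1 <= s by nra.
set A := \sum_(i < S.+1) I i in H *.
have hA := ler_norm A.
have hC := ler_norm C.
have hI0 := ler_norm (I 0%N).
have k1 : C * s <= `|C| * s by rewrite ler_wpM2r // ltW.
have k2 : K * I 0%N <= K * `|I 0%N| by rewrite ler_wpM2l.
have k3 : K * `|I 0%N| <= K * `|I 0%N| * s.
  by rewrite ler_peMr // mulr_ge0.
have key : A + K * I 0%N <= (`|C| + K * `|I 0%N|) * s by nra.
rewrite rr.
have -> : (`|C| + K * `|I 0%N|) / s = (s * s)^-1 * ((`|C| + K * `|I 0%N|) * s).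
  by field; rewrite lt0r_neq0.
by rewrite ler_wpM2l // invr_ge0 mulr_ge0 // ltW.
Qed.
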